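(* For the modified EnvZ/OmpR network described in the context and any positive rate constants $k_1,\dots,k_{16}$, put \[\gamma=\frac{k_{10}k_{12}}{k_{11}+k_{12}}\cdot\frac{k_3}{k_4+k_5}+\frac{k_{13}k_{15}}{k_{14}+k_{15}}\cdot\frac{k_2}{k_1}.\] Then for every choice of positive values of $[\mathrm{EnvZ}]$ and $[\mathrm{EnvZ\text{-}P}]$ there is exactly one positive steady state with these values, and at every positive steady state \[[\mathrm{OmpR\text{-}P}]=\frac{k_3k_5\,[\mathrm{EnvZ}]}{(k_4+k_5)(\gamma[\mathrm{EnvZ}]+k_{16})}.\] Consequently, the set of values of $[\mathrm{OmpR\text{-}P}]$ over all positive steady states is exactly the open interval $\bigl(0,\;k_3k_5/((k_4+k_5)\gamma)\bigr)$; in particular $[\mathrm{OmpR\text{-}P}]$ does not exhibit absolute concentration robustness (it takes different values at different positive steady states), and $k_3k_5/((k_4+k_5)\gamma)$ is the best possible upper bound.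
   Context: The modified EnvZ/OmpR network has mass-action kinetics and reactions $\mathrm{EnvZ\text{-}ADP}\underset{k_2}{\overset{k_1}{\rightleftharpoons}}\mathrm{EnvZ}\underset{k_4}{\overset{k_3}{\rightleftharpoons}}\mathrm{EnvZ\text{-}ATP}\xrightarrow{k_5}\mathrm{EnvZ\text{-}P}$; $\mathrm{EnvZ\text{-}P}+\mathrm{OmpR}\underset{k_7}{\overset{k_6}{\rightleftharpoons}}\mathrm{EnvZ\text{-}P\text{-}OmpR}\underset{k_9}{\overset{k_8}{\rightleftharpoons}}\mathrm{EnvZ}+\mathrm{OmpR\text{-}P}$; $\mathrm{EnvZ\text{-}ATP}+\mathrm{OmpR\text{-}P}\underset{k_{11}}{\overset{k_{10}}{\rightleftharpoons}}\mathrm{EnvZ\text{-}ATP\text{-}OmpR\text{-}P}\xrightarrow{k_{12}}\mathrm{EnvZ\text{-}ATP}+\mathrm{OmpR}$; $\mathrm{EnvZ\text{-}ADP}+\mathrm{OmpR\text{-}P}\underset{k_{14}}{\overset{k_{13}}{\rightleftharpoons}}\mathrm{EnvZ\text{-}ADP\text{-}OmpR\text{-}P}\xrightarrow{k_{15}}\mathrm{EnvZ\text{-}ADP}+\mathrm{OmpR}$; $\mathrm{OmpR\text{-}P}\xrightarrow{k_{16}}\mathrm{OmpR}$ (here $A\underset{k'}{\overset{k}{\rightleftharpoons}}B$ means $A\xrightarrow{k}B$ and $B\xrightarrow{k'}A$; hyphenated names are single species, nine species in total). Square brackets denote concentrations; a positive steady state is a vector of positive concentrations of all nine species at which all mass-action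 rates of change vanish. A species exhibits absolute concentration robustness if it takes the same value at every positive steady state. *)

(* Defs.v *)
From Stdlib Require Import Reals Lra.
Open Scope R_scope.

Record state : Type := mkState {
  EnvZ_ADP : R;
  EnvZ : R;
  EnvZ_ATP : R;
  EnvZ_P : R;
  OmpR : R;
  EnvZ_P_OmpR : R;
  OmpR_P : R;
  EnvZ_ATP_OmpR_P : R;
  EnvZ_ADP_OmpR_P : R }.

(* Rate constants k_1..k_16 are given by a function k : nat -> R
   (only the values k 1, ..., k 16 matter). *)
Definition rates_pos (k : nat -> R) : Prop :=
  forall i : nat, (1 <= i <= 16)%nat -> 0 < k i.

Section Rates.
Variables (k : nat -> R) (x : state).
Definition r1 := k 1%nat * EnvZ_ADP x.
Definition r2 := k 2%nat * EnvZ x.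
Definition r3 := k 3%nat * EnvZ x.
Definition r4 := k 4%nat * EnvZ_ATP x.
Definition r5 := k 5%nat * EnvZ_ATP x.
Definition r6 := k 6%nat * EnvZ_P x * OmpR x.
Definition r7 := k 7%nat * EnvZ_P_OmpR x.
Definition r8 := k 8%nat * EnvZ_P_OmpR x.
Definition r9 := k 9%nat * EnvZ x * OmpR_P x.
Definition r10 := k 10%nat * EnvZ_ATP x * OmpR_P x.
Definition r11 := k 11%nat * EnvZ_ATP_OmpR_P x.
Definition r12 := k 12%nat * EnvZ_ATP_OmpR_P x.
Definition r13 := k 13%nat * EnvZ_ADP x * OmpR_P x.
Definition r14 := k 14%nat * EnvZ_ADP_OmpR_P x.
Definition r15 := k 15%nat * EnvZ_ADP_OmpR_P x.
Definition r16 := k 16%nat * OmpR_P x.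

Definition d_EnvZ_ADP := - r1 + r2 - r13 + r14 + r15.
Definition d_EnvZ := r1 - r2 - r3 + r4 + r8 - r9.
Definition d_EnvZ_ATP := r3 - r4 - r5 - r10 + r11 + r12.
Definition d_EnvZ_P := r5 - r6 + r7.
Definition d_OmpR := - r6 + r7 + r12 + r15 + r16.
Definition d_EnvZ_P_OmpR := r6 - r7 - r8 + r9.
Definition d_OmpR_P := r8 - r9 - r10 + r11 - r13 + r14 - r16.
Definition d_EnvZ_ATP_OmpR_P := r10 - r11 - r12.
Definition d_EnvZ_ADP_OmpR_P := r13 - r14 - r15.
End Rates.

Definition positive_state (x : state) : Prop :=
  0 < EnvZ_ADP x /\ 0 < EnvZ x /\ 0 < EnvZ_ATP x /\ 0 < EnvZ_P x /\
  0 < OmpR x /\ 0 < EnvZ_P_OmpR x /\ 0 < OmpR_P x /\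
  0 < EnvZ_ATP_OmpR_P x /\ 0 < EnvZ_ADP_OmpR_P x.

Definition positive_steady_state (k : nat -> R) (x : state) : Prop :=
  positive_state x /\
  d_EnvZ_ADP k x = 0 /\ d_EnvZ k x = 0 /\ d_EnvZ_ATP k x = 0 /\
  d_EnvZ_P k x = 0 /\ d_OmpR k x = 0 /\ d_EnvZ_P_OmpR k x = 0 /\
  d_OmpR_P k x = 0 /\ d_EnvZ_ATP_OmpR_P k x = 0 /\ d_EnvZ_ADP_OmpR_P k x = 0.

Definition ACR (k : nat -> R) (sp : state -> R) : Prop :=
  exists c : R, forall x : state, positive_steady_state k x -> sp x = c.

Definition gamma (k : nat -> R) : R :=
  k 10%nat * k 12%nat / (k 11%nat + k 12%nat) * (k 3%nat / (k 4%nat + k 5%nat))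
  + k 13%nat * k 15%nat / (k 14%nat + k 15%nat) * (k 2%nat / k 1%nat).

(* Main.v *)
Require Import Defs.
From Stdlib Require Import Reals Lra Lia.
Open Scope R_scope.

Ltac getK k hk :=
  let f i := (assert (0 < k i) by (apply hk; lia)) in
  f 1%nat; f 2%nat; f 3%nat; f 4%nat; f 5%nat; f 6%nat; f 7%nat; f 8%nat;
  f 9%nat; f 10%nat; f 11%nat; f 12%nat; f 13%nat; f 14%nat; f 15%nat; f 16%nat.

Ltac pos := repeat (first [assumption | apply Rdiv_lt_0_compat | apply Rinv_0_lt_compat | apply Rplus_lt_0_compat
   | apply Rmult_lt_0_compat | apply Rdiv_lt_0_compat]).

Ltac nz := repeat split; try (apply Rgt_not_eq; unfold Rgt; pos).

Definition qf (k : nat -> R) (e : R) :=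
  k 3%nat * k 5%nat * e / ((k 4%nat + k 5%nat) * (gamma k * e + k 16%nat)).

Definition mk (k : nat -> R) (e p : R) : state :=
  let t := k 3%nat * e / (k 4%nat + k 5%nat) in
  let a := k 2%nat * e / k 1%nat in
  let q := qf k e in
  let d := k 10%nat * t * q / (k 11%nat + k 12%nat) in
  let f := k 13%nat * a * q / (k 14%nat + k 15%nat) in
  let c := (k 5%nat * t + k 9%nat * e * q) / k 8%nat in
  let o := (k 5%nat * t + k 7%nat * c) / (k 6%nat * p) in
  mkState a e t p o c q d f.

Lemma gamma_pos k : rates_pos k -> 0 < gamma k.
Proof. intro hk. getK k hk. unfold gamma. pos. Qed.

Lemma gamma_e k e : rates_pos k ->
  gamma k * e = k 10%nat * k 12%nat / (k 11%nat + k 12%nat) * (k 3%nat * e / (k 4%nat + k 5%nat))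
    + k 13%nat * k 15%nat / (k 14%nat + k 15%nat) * (k 2%nat * e / k 1%nat).
Proof. intro hk. getK k hk. unfold gamma. field. nz. Qed.

Lemma qf_pos k e : rates_pos k -> 0 < e -> 0 < qf k e.
Proof. intros hk he. getK k hk. pose proof (gamma_pos k hk). unfold qf. pos. Qed.

Lemma mk_steady k e p : rates_pos k -> 0 < e -> 0 < p ->
  positive_steady_state k (mk k e p).
Proof.
  intros hk he hp. getK k hk. pose proof (gamma_pos k hk) as G.
  pose proof (qf_pos k e hk he) as Q.
  pose proof (gamma_e k e hk) as Hg.
  assert (0 < gamma k * e) by pos.
  unfold positive_steady_state, positive_state, mk,
    d_EnvZ_ADP, d_EnvZ, d_EnvZ_ATP, d_EnvZ_P, d_OmpR, d_EnvZ_P_OmpR,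
    d_OmpR_P, d_EnvZ_ATP_OmpR_P, d_EnvZ_ADP_OmpR_P,
    r1, r2, r3, r4, r5, r6, r7, r8, r9, r10, r11, r12, r13, r14, r15, r16; cbn.
  set (q := qf k e) in *.
  assert (Hq : q * (gamma k * e + k 16%nat) = k 5%nat * (k 3%nat * e / (k 4%nat + k 5%nat))).
  { unfold q, qf. field. nz. }
  split; [repeat split; pos|].
  repeat split.
  - field. nz.
  - field. nz.
  - field. nz.
  - field. nz.
  - transitivity ((q * (gamma k * e + k 16%nat) - k 5%nat * (k 3%nat * e / (k 4%nat + k 5%nat))) + q * ((k 10%nat * k 12%nat / (k 11%nat + k 12%nat) * (k 3%nat * e / (k 4%nat + k 5%nat)) + k 13%nat * k 15%nat / (k 14%nat + k 15%nat) * (k 2%nat * e / k 1%nat)) - gamma k * e)); [field; nz | rewrite Hq, Hg; ring].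
  - field. nz.
  - transitivity (-((q * (gamma k * e + k 16%nat) - k 5%nat * (k 3%nat * e / (k 4%nat + k 5%nat))) + q * ((k 10%nat * k 12%nat / (k 11%nat + k 12%nat) * (k 3%nat * e / (k 4%nat + k 5%nat)) + k 13%nat * k 15%nat / (k 14%nat + k 15%nat) * (k 2%nat * e / k 1%nat)) - gamma k * e))); [field; nz | rewrite Hq, Hg; ring].
  - field. nz.
  - field. nz.
Qed.

Lemma steady_eq k x : rates_pos k -> positive_steady_state k x ->
  x = mk k (EnvZ x) (EnvZ_P x).
Proof.
  intros hk Hs. getK k hk. pose proof (gamma_pos k hk) as G.
  destruct x as [A E T P O C Q D F]; cbn.
  unfold positive_steady_state, positive_state,
    d_EnvZ_ADP, d_EnvZ, d_EnvZ_ATP, d_EnvZ_P, d_OmpR, d_EnvZ_P_OmpR,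
    d_OmpR_P, d_EnvZ_ATP_OmpR_P, d_EnvZ_ADP_OmpR_P,
    r1, r2, r3, r4, r5, r6, r7, r8, r9, r10, r11, r12, r13, r14, r15, r16 in Hs; cbn in Hs.
  destruct Hs as [[PA [PE [PT [PP [PO [PC [PQ [PD PF]]]]]]]] [E1 [E2 [E3 [E4 [E5 [E6 [E7 [E8 E9]]]]]]]]].
  pose proof (gamma_e k E hk) as Hg.
  assert (HA : A = k 2%nat * E / k 1%nat).
  { apply Rmult_eq_reg_l with (k 1%nat); [|lra].
    replace (k 1%nat * A) with (k 2%nat * E) by lra. field. nz. }
  assert (HT : T = k 3%nat * E / (k 4%nat + k 5%nat)).
  { apply Rmult_eq_reg_l with (k 4%nat + k 5%nat); [|lra].
    replace ((k 4%nat + k 5%nat) * T) with (k 3%nat * E) by lra. field. nz. }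
  assert (HD : D = k 10%nat * T * Q / (k 11%nat + k 12%nat)).
  { apply Rmult_eq_reg_l with (k 11%nat + k 12%nat); [|lra].
    replace ((k 11%nat + k 12%nat) * D) with (k 10%nat * T * Q) by lra. field. nz. }
  assert (HF : F = k 13%nat * A * Q / (k 14%nat + k 15%nat)).
  { apply Rmult_eq_reg_l with (k 14%nat + k 15%nat); [|lra].
    replace ((k 14%nat + k 15%nat) * F) with (k 13%nat * A * Q) by lra. field. nz. }
  assert (HC : C = (k 5%nat * T + k 9%nat * E * Q) / k 8%nat).
  { apply Rmult_eq_reg_l with (k 8%nat); [|lra].
    replace (k 8%nat * C) with (k 5%nat * T + k 9%nat * E * Q) by lra. field. nz. }
  assert (HO : O = (k 5%nat * T + k 7%nat * C) / (k 6%nat * P)).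
  { assert (0 < k 6%nat * P) by pos.
    apply Rmult_eq_reg_l with (k 6%nat * P); [|lra].
    replace (k 6%nat * P * O) with (k 5%nat * T + k 7%nat * C) by lra. field. nz. }
  assert (HQ0 : k 5%nat * T = k 12%nat * D + k 15%nat * F + k 16%nat * Q) by lra.
  assert (HQ1 : Q * (gamma k * E + k 16%nat) = k 5%nat * T).
  { rewrite HQ0, Hg, HD, HF, HA, HT. field. nz. }
  assert (HQ : Q = qf k E).
  { assert (0 < gamma k * E + k 16%nat) by pos.
    apply Rmult_eq_reg_r with (gamma k * E + k 16%nat); [|lra].
    rewrite HQ1, HT. unfold qf. field. nz. }
  subst O. subst C. subst D. subst F. subst Q. subst T. subst A.
  reflexivity.
Qed.

Lemma qf_bound k e : rates_pos k -> 0 < e ->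
  k 3%nat * k 5%nat / ((k 4%nat + k 5%nat) * gamma k) - qf k e =
  k 3%nat * k 5%nat * k 16%nat / ((k 4%nat + k 5%nat) * gamma k * (gamma k * e + k 16%nat)).
Proof.
  intros hk he. getK k hk. pose proof (gamma_pos k hk). assert (0 < gamma k * e) by pos.
  unfold qf. field. nz.
Qed.

Theorem mainTheorem10 (k : nat -> R) (hk : rates_pos k) :
  (forall e ep : R, 0 < e -> 0 < ep ->
     exists! x : state,
       positive_steady_state k x /\ EnvZ x = e /\ EnvZ_P x = ep) /\
  (forall x : state, positive_steady_state k x ->
     OmpR_P x = k 3%nat * k 5%nat * EnvZ x /
                ((k 4%nat + k 5%nat) * (gamma k * EnvZ x + k 16%nat))) /\
  (forall v : R,
     (exists x : state, positive_steady_state k x /\ OmpR_P x = v) <->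
     (0 < v /\ v < k 3%nat * k 5%nat / ((k 4%nat + k 5%nat) * gamma k))) /\
  ~ ACR k OmpR_P.
Proof.
  pose proof (gamma_pos k hk) as G. getK k hk.
  assert (Part2 : forall x : state, positive_steady_state k x ->
     OmpR_P x = qf k (EnvZ x)).
  { intros x Hx. rewrite (steady_eq k x hk Hx) at 1. reflexivity. }
  split; [|split; [|split]].
  - intros e ep he hep. exists (mk k e ep). split.
    + split; [apply mk_steady; auto | split; reflexivity].
    + intros x [Hx [He Hp]]. rewrite (steady_eq k x hk Hx), He, Hp. reflexivity.
  - exact Part2.
  - intro v. split.
    + intros [x [Hx Hv]]. subst v. rewrite (Part2 x Hx).
      assert (PE : 0 < EnvZ x) by (destruct Hx as [[_ [P _]] _]; exact P).
      split; [apply qf_pos; auto|].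
      pose proof (qf_bound k (EnvZ x) hk PE) as B.
      assert (0 < gamma k * EnvZ x) by pos.
      assert (0 < k 3%nat * k 5%nat * k 16%nat / ((k 4%nat + k 5%nat) * gamma k * (gamma k * EnvZ x + k 16%nat))) by pos.
      lra.
    + intros [hv hlt].
      set (M := k 3%nat * k 5%nat / (k 4%nat + k 5%nat)).
      assert (HM : M - gamma k * v > 0).
      { assert (k 3%nat * k 5%nat / ((k 4%nat + k 5%nat) * gamma k) = M / gamma k)
          by (unfold M; field; nz).
        rewrite H15 in hlt.
        apply Rmult_lt_compat_r with (r := gamma k) in hlt; [|lra].
        replace (M / gamma k * gamma k) with M in hlt by (field; nz). lra. }
      set (e := k 16%nat * v / (M - gamma k * v)).
      assert (he : 0 < e) by (unfold e; pos).
      exists (mk k e 1). split; [apply mk_steady; auto; lra|].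
      cbn. unfold qf.
      assert (Hden : gamma k * e + k 16%nat = k 16%nat * M / (M - gamma k * v))
        by (unfold e; field; nz).
      assert (HX : k 3%nat * k 5%nat - gamma k * v * (k 4%nat + k 5%nat) = (k 4%nat + k 5%nat) * (M - gamma k * v)) by (unfold M; field; nz).
      assert (0 < (k 4%nat + k 5%nat) * (M - gamma k * v)) by (apply Rmult_lt_0_compat; lra).
      rewrite Hden. unfold e, M. field. unfold M in HX. rewrite HX. split; [nz|split;[unfold M in *; apply Rgt_not_eq; lra|nz]].
  - intros [c Hc].
    pose proof (Hc _ (mk_steady k 1 1 hk ltac:(lra) ltac:(lra))) as C1.
    pose proof (Hc _ (mk_steady k 2 1 hk ltac:(lra) ltac:(lra))) as C2.
    cbn in C1, C2.
    assert (qf k 2 - qf k 1 = k 3%nat * k 5%nat / (k 4%nat + k 5%nat) * k 16%nat /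
      ((gamma k * 2 + k 16%nat) * (gamma k * 1 + k 16%nat))).
    { unfold qf. field. split; nz; lra. }
    assert (0 < k 3%nat * k 5%nat / (k 4%nat + k 5%nat) * k 16%nat /
      ((gamma k * 2 + k 16%nat) * (gamma k * 1 + k 16%nat))) by (pos; lra).
    lra.
Qed.
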